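(* A point $(x,y)\in\mathbb R^2$ belongs to $\mathcal P_0$ if and only if both $x$ and $y$ belong to $\mathbb F_0$.
   Context: An origami pair is a pair $(\mathcal P,\mathcal L)$ where $\mathcal P\subset\mathbb R^2$ is a set of points and $\mathcal L$ is a collection of lines in $\mathbb R^2$ such that: (i) the intersection point of any two non-parallel lines of $\mathcal L$ lies in $\mathcal P$; (ii) for any two distinct points of $\mathcal P$, the line through them is in $\mathcal L$; (iii) for any two distinct points of $\mathcal P$, the perpendicular bisector of the segment joining them is in $\mathcal L$; (iv) if $L_1,L_2\in\mathcal L$, then every line equidistant from $L_1$ and $L_2$ is in $\mathcal L$ (the midline if they are parallel, the angle bisectors if they intersect); (v) if $L_1,L_2\in\mathcal L$, then the mirror reflection of $L_2$ across $L_1$ is in $\mathcal L$. A set $\mathcal P\subset\mathbb R^2$ is closed under origami constructions if there is a collection of lines $\mathcal L$ with $(\mathcal P,\mathcal L)$ an origami pair. The set of origami constructible points is $\mathcal P_0=\bigcap\{\mathcal P : (0,0),(0,1)\in\mathcal P \text{ and } \mathcal P \text{ is closed under origami constructions}\}$. The set of origami numbers is $\mathbb F_0=\{\alpha\in\mathbb R : \exists v_1,v_2\in\mathcal P_0,\ |\alpha|=\operatorname{dist}(v_1,v_2)\}$. *)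

(* Defs.v *)
From Stdlib Require Import Reals.
Open Scope R_scope.

Definition point := (R * R)%type.
Definition pset := point -> Prop.

Definition dist2 (p q : point) : R :=
  (fst p - fst q) ^ 2 + (snd p - snd q) ^ 2.
Definition dist (p q : point) : R := sqrt (dist2 p q).

Definition is_line (S : pset) : Prop :=
  exists a b c : R, (a <> 0 \/ b <> 0) /\
    forall z : point, S z <-> a * fst z + b * snd z = c.

(* line through p and q (a line when p <> q) *)
Definition line_through (p q : point) : pset := fun z =>
  (fst q - fst p) * (snd z - snd p) - (snd q - snd p) * (fst z - fst p) = 0.

(* perpendicular bisector of the segment pq (a line when p <> q) *)
Definition perp_bisector (p q : point) : pset := fun z => dist2 z p = dist2 z q.

Definition is_sqdist (z : point) (S : pset) (r : R) : Prop :=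
  (exists f, S f /\ dist2 z f = r) /\ (forall w, S w -> r <= dist2 z w).

Definition equidistant_pt (z : point) (S1 S2 : pset) : Prop :=
  exists r, is_sqdist z S1 r /\ is_sqdist z S2 r.

Definition mirror (L : pset) (z z' : point) : Prop :=
  (forall w, L w -> dist2 w z = dist2 w z') /\ (z' <> z \/ L z).

Definition reflect_set (L S : pset) : pset := fun z' =>
  exists z, S z /\ mirror L z z'.

Definition origami_pair (P : pset) (Ls : pset -> Prop) : Prop :=
  (forall L, Ls L -> is_line L) /\
  (* (i) intersection point of two non-parallel (distinct, meeting) lines *)
  (forall L1 L2 p, Ls L1 -> Ls L2 -> (exists q, L1 q /\ ~ L2 q) ->
     L1 p -> L2 p -> P p) /\
  (forall p q, P p -> P q -> p <> q -> Ls (line_through p q)) /\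
  (forall p q, P p -> P q -> p <> q -> Ls (perp_bisector p q)) /\
  (forall L1 L2 L, Ls L1 -> Ls L2 -> (exists q, L1 q /\ ~ L2 q) -> is_line L ->
     (forall z, L z -> equidistant_pt z L1 L2) -> Ls L) /\
  (forall L1 L2, Ls L1 -> Ls L2 -> Ls (reflect_set L1 L2)).

Definition origami_closed (P : pset) : Prop := exists Ls, origami_pair P Ls.

Definition P0 : pset := fun v =>
  forall P : pset, P (0, 0) -> P (0, 1) -> origami_closed P -> P v.

Definition F0 (alpha : R) : Prop :=
  exists v1 v2, P0 v1 /\ P0 v2 /\ Rabs alpha = dist v1 v2.

(* Main.v *)
Require Import Defs.
From Stdlib Require Import Reals Lra Psatz Classical.
Open Scope R_scope.

Definition refl (a b c : R) (z : point) : point :=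
  (fst z - 2 * ((a * fst z + b * snd z - c) / (a^2 + b^2)) * a,
   snd z - 2 * ((a * fst z + b * snd z - c) / (a^2 + b^2)) * b).

Definition line_eq (L : pset) a b c := forall z : point, L z <-> a * fst z + b * snd z = c.

Lemma n_pos a b : a <> 0 \/ b <> 0 -> 0 < a^2 + b^2.
Proof.
  intros [H|H]; [pose proof (Rsqr_pos_lt a H) | pose proof (Rsqr_pos_lt b H)];
  unfold Rsqr in *; nra.
Qed.

Lemma refl_invol a b c z : a <> 0 \/ b <> 0 -> refl a b c (refl a b c z) = z.
Proof.
  intros Hab. pose proof (n_pos a b Hab) as Hn.
  destruct z as [x y]. unfold refl; cbn [fst snd].
  f_equal; field; lra.
Qed.

Lemma mirror_refl L a b c z : line_eq L a b c -> (a <> 0 \/ b <> 0) -> mirror L z (refl a b c z).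
Proof.
  intros HL Hab. pose proof (n_pos a b Hab) as Hn.
  destruct z as [x y]. split.
  - intros [wx wy] Hw. apply HL in Hw. cbn [fst snd] in Hw.
    unfold dist2, refl; cbn [fst snd].
    set (k := (a*x+b*y-c)/(a^2+b^2)).
    assert (Hk : k * (a^2+b^2) = a*x+b*y-c) by (unfold k; field; lra).
    assert (E: (wx - (x - 2*k*a))^2 + (wy - (y - 2*k*b))^2 = (wx-x)^2 + (wy-y)^2 + 4*k*(a*wx+b*wy - (a*x+b*y)) + 4*(k*(k*(a^2+b^2)))) by ring.
    rewrite E, Hk, Hw. ring.
  - destruct (Req_dec (a*x+b*y) c) as [He|He].
    + right. apply HL. exact He.
    + left. intro Heq. unfold refl in Heq; cbn [fst snd] in Heq. pose proof (f_equal fst Heq) as H1; pose proof (f_equal snd Heq) as H2; cbn [fst snd] in H1, H2.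
      set (k := (a*x+b*y-c)/(a^2+b^2)) in *.
      assert (Hk : k * (a^2+b^2) = a*x+b*y-c) by (unfold k; field; lra).
      assert (Ha: k*a = 0) by lra. assert (Hb: k*b = 0) by lra.
      assert (k = 0).
      { destruct Hab as [Ha'|Hb'].
        - apply Rmult_integral in Ha; destruct Ha; [auto|contradiction].
        - apply Rmult_integral in Hb; destruct Hb; [auto|contradiction]. }
      rewrite H in Hk. lra.
Qed.

Lemma mirror_unique L a b c z z' : line_eq L a b c -> (a <> 0 \/ b <> 0) -> mirror L z z' -> z' = refl a b c z.
Proof.
  intros HL Hab [Hd Hne]. pose proof (n_pos a b Hab) as Hn.
  destruct z as [x y]; destruct z' as [x' y'].
  assert (Hw0 : L (c*a/(a^2+b^2), c*b/(a^2+b^2))) by (apply HL; cbn [fst snd]; field; lra).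
  assert (Hw1 : L (c*a/(a^2+b^2) - b, c*b/(a^2+b^2) + a)) by (apply HL; cbn [fst snd]; field; lra).
  pose proof (Hd _ Hw0) as D0. pose proof (Hd _ Hw1) as D1.
  unfold dist2 in D0, D1; cbn [fst snd] in D0, D1.
  set (u := c*a/(a^2+b^2)) in *. set (v := c*b/(a^2+b^2)) in *.
  assert (Huv : a*u + b*v = c) by (unfold u, v; field; lra).
  assert (P1: -b*(x'-x) + a*(y'-y) = 0).
  { assert (I: ((u - b - x)^2 + (v + a - y)^2 - (u - b - x')^2 - (v+a-y')^2) - ((u - x)^2 + (v - y)^2 - (u - x')^2 - (v - y')^2) = 2*(-b*(x'-x) + a*(y'-y))) by ring.
    lra. }
  set (t := (a*(x'-x) + b*(y'-y))/(a^2+b^2)).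
  assert (Hx : x' - x - t*a = b*(b*(x'-x) - a*(y'-y))/(a^2+b^2)) by (unfold t; field; lra).
  assert (Hy : y' - y - t*b = a*(a*(y'-y) - b*(x'-x))/(a^2+b^2)) by (unfold t; field; lra).
  assert (Ex: x' = x + t*a).
  { replace (b*(x'-x) - a*(y'-y)) with 0 in Hx by lra. unfold Rdiv in Hx. lra. }
  assert (Ey: y' = y + t*b).
  { replace (a*(y'-y) - b*(x'-x)) with 0 in Hy by lra. unfold Rdiv in Hy. lra. }
  clearbody t. subst x' y'.
  assert (K: t*(t*(a^2+b^2) + 2*(a*x+b*y-c)) = 0).
  { assert (I: ((u - (x + t*a))^2 + (v - (y+t*b))^2) - ((u - x)^2 + (v - y)^2) = t*(t*(a^2+b^2) + 2*(a*x+b*y-(a*u+b*v)))) by ring.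
    rewrite Huv in I. lra. }
  apply Rmult_integral in K. destruct K as [K|K].
  - subst t. destruct Hne as [Hne|Hz].
    + exfalso; apply Hne. f_equal; ring.
    + apply HL in Hz; cbn [fst snd] in Hz. unfold refl; cbn [fst snd].
      replace (a*x+b*y-c) with 0 by lra. f_equal; field; lra.
  - unfold refl; cbn [fst snd].
    replace t with (t*(a^2+b^2)/(a^2+b^2)) by (field; lra).
    replace (t*(a^2+b^2)) with (-2*(a*x+b*y-c)) by lra.
    f_equal; field; lra.
Qed.

Lemma reflect_set_iff L M a b c z : line_eq L a b c -> (a<>0\/b<>0) ->
  (reflect_set L M z <-> M (refl a b c z)).
Proof.
  intros HL Hab. split.
  - intros [w [Mw Hm]]. apply (mirror_unique L a b c) in Hm; auto. subst z.
    rewrite refl_invol; auto.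
  - intro Hz. exists (refl a b c z). split; auto.
    pose proof (mirror_refl L a b c (refl a b c z) HL Hab) as H.
    rewrite refl_invol in H; auto.
Qed.

Lemma refl_iso a b c p q : a <> 0 \/ b <> 0 -> dist2 (refl a b c p) (refl a b c q) = dist2 p q.
Proof.
  intros Hab. pose proof (n_pos a b Hab).
  destruct p as [x y]; destruct q as [x' y']; unfold dist2, refl; cbn [fst snd]. field; lra.
Qed.

Lemma sqdist_line S a b c z : line_eq S a b c -> 0 < a^2+b^2 ->
  is_sqdist z S ((a*fst z + b*snd z - c)^2/(a^2+b^2)).
Proof.
  intros HS Hn. destruct z as [x y]; cbn [fst snd].
  split.
  - exists (x - (a*x+b*y-c)/(a^2+b^2)*a, y - (a*x+b*y-c)/(a^2+b^2)*b). split.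
    + apply HS; cbn [fst snd]. field; lra.
    + unfold dist2; cbn [fst snd]. field; lra.
  - intros [wx wy] Hw. apply HS in Hw; cbn [fst snd] in Hw. unfold dist2; cbn [fst snd].
    assert (E: (a^2+b^2)*((x-wx)^2+(y-wy)^2) - (a*x+b*y-c)^2 = (a*(y-wy) - b*(x-wx))^2).
    { rewrite <- Hw. ring. }
    pose proof (pow2_ge_0 (a*(y-wy) - b*(x-wx))).
    apply Rmult_le_reg_r with (a^2+b^2); [lra|].
    unfold Rdiv. rewrite Rmult_assoc, Rinv_l, Rmult_1_r by lra. lra.
Qed.

Lemma bisector P Ls L1 L2 L a1 b1 c1 a2 b2 c2 : origami_pair P Ls -> Ls L1 -> Ls L2 ->
  line_eq L1 a1 b1 c1 -> line_eq L2 a2 b2 c2 -> (a1<>0\/b1<>0) -> a1^2+b1^2 = a2^2+b2^2 ->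
  (exists q, L1 q /\ ~ L2 q) -> line_eq L (a1-a2) (b1-b2) (c1-c2) -> (a1-a2<>0 \/ b1-b2<>0) -> Ls L.
Proof.
  intros HO H1 H2 E1 E2 Hab Hnorm Hq EL Hab'.
  destruct HO as [_ [_ [_ [_ [Hbis _]]]]].
  pose proof (n_pos _ _ Hab) as Hn.
  apply (Hbis L1 L2 L H1 H2 Hq).
  - exists (a1-a2), (b1-b2), (c1-c2). split; auto.
  - intros z Hz. apply EL in Hz.
    exists ((a1*fst z + b1*snd z - c1)^2/(a1^2+b1^2)). split.
    + apply sqdist_line; auto.
    + replace (a1 * fst z + b1 * snd z - c1) with (a2 * fst z + b2 * snd z - c2) by lra.
      rewrite Hnorm. apply sqdist_line; auto. lra.
Qed.

Lemma refl_point P Ls L a b c p q r : origami_pair P Ls -> Ls L -> line_eq L a b c -> (a<>0\/b<>0) ->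
  P p -> P q -> P r -> ~ line_through p q r -> P (refl a b c p).
Proof.
  intros HO HLs HL Hab Hp Hq Hr Hnc.
  destruct HO as [_ [Hint [Hthru [_ [_ Hrefl]]]]].
  assert (Hpq: p <> q). { intro E; subst q; apply Hnc; unfold line_through; ring. }
  assert (Hpr: p <> r). { intro E; subst r; apply Hnc; unfold line_through; ring. }
  pose proof (Hthru p q Hp Hq Hpq) as H1. pose proof (Hthru p r Hp Hr Hpr) as H2.
  pose proof (Hrefl L _ HLs H1) as R1. pose proof (Hrefl L _ HLs H2) as R2.
  apply (Hint _ _ _ R1 R2).
  - exists (refl a b c q). split.
    + apply (reflect_set_iff L _ a b c); auto. rewrite refl_invol; auto. unfold line_through; ring.
    + intro E. apply (proj1 (reflect_set_iff L (line_through p r) a b c _ HL Hab)) in E. rewrite refl_invol in E; auto.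
      unfold line_through in *. apply Hnc. lra.
  - apply (reflect_set_iff L _ a b c); auto. rewrite refl_invol; auto. unfold line_through; ring.
  - apply (reflect_set_iff L _ a b c); auto. rewrite refl_invol; auto. unfold line_through; ring.
Qed.

Lemma P_eq (P : pset) p q : P p -> p = q -> P q.
Proof. intros H E; subst; auto. Qed.

Definition Yl : pset := line_through (0,0) (0,1).
Definition Xl : pset := perp_bisector (0,-1/2) (0,1/2).
Definition Dg : pset := fun z => (0-1)*fst z + (1-0)*snd z = 0 - 0.

Lemma Yl_eq : line_eq Yl 1 0 0.
Proof. intros [x y]; unfold Yl, line_through; cbn [fst snd]; split; intro; lra. Qed.
Lemma Xl_eq : line_eq Xl 0 1 0.
Proof. intros [x y]; unfold Xl, perp_bisector, dist2; cbn [fst snd]; split; intro; lra. Qed.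
Lemma Dg_eq : line_eq Dg (0-1) (1-0) (0-0).
Proof. intros z; unfold Dg; tauto. Qed.

Ltac nd := first [left; lra | right; lra].

Lemma base P Ls : origami_pair P Ls -> P (0,0) -> P (0,1) ->
  (forall L a b c p, Ls L -> line_eq L a b c -> (a<>0\/b<>0) -> P p -> P (refl a b c p)) /\
  Ls Xl /\ Ls Yl /\ Ls Dg.
Proof.
  intros HO HO0 HA.
  pose proof HO as [_ [Hint [Hthru [Hpb _]]]].
  assert (HY : Ls Yl) by (apply Hthru; auto; intro E; inversion E; lra).
  pose (H := perp_bisector (0,0) (0,1)).
  assert (HH : Ls H) by (apply Hpb; auto; intro E; inversion E; lra).
  assert (EH : line_eq H 0 1 (1/2)).
  { intros [x y]; unfold H, perp_bisector, dist2; cbn [fst snd]; split; intro; lra. }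
  assert (HM : P (0,1/2)).
  { apply (Hint Yl H); auto.
    - exists (0,0). split. apply Yl_eq; cbn [fst snd]; lra. intro Q; apply EH in Q; cbn [fst snd] in Q; lra.
    - apply Yl_eq; cbn [fst snd]; lra.
    - apply EH; cbn [fst snd]; lra. }
  pose (D := fun z : point => (1-0)*fst z + (0-1)*snd z = 0 - 1/2).
  assert (HD : Ls D).
  { apply (bisector P Ls Yl H D 1 0 0 0 1 (1/2)); auto using Yl_eq; try nd; try lra.
    - exists (0,0). split. apply Yl_eq; cbn [fst snd]; lra. intro Q; apply EH in Q; cbn [fst snd] in Q; lra.
    - intro z; unfold D; tauto. }
  pose (H2 := perp_bisector (0,0) (0,1/2)).
  assert (HH2 : Ls H2) by (apply Hpb; auto; intro E; inversion E; lra).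
  assert (EH2 : line_eq H2 0 1 (1/4)).
  { intros [x y]; unfold H2, perp_bisector, dist2; cbn [fst snd]; split; intro; lra. }
  assert (HC : P (-1/4,1/4)).
  { apply (Hint D H2); auto.
    - exists (0,1/2). split. unfold D; cbn [fst snd]; lra. intro Q; apply EH2 in Q; cbn [fst snd] in Q; lra.
    - unfold D; cbn [fst snd]; lra.
    - apply EH2; cbn [fst snd]; lra. }
  assert (Href : forall L a b c p, Ls L -> line_eq L a b c -> (a<>0\/b<>0) -> P p -> P (refl a b c p)).
  { intros L a b c [px py] HL EL Hab Hp.
    destruct (Req_dec px 0) as [Hx|Hx].
    - destruct (Req_dec py 0) as [Hy|Hy].
      + subst. apply (refl_point P Ls L a b c (0,0) (0,1) (-1/4,1/4)); auto.
        unfold line_through; cbn [fst snd]; lra.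
      + subst. apply (refl_point P Ls L a b c (0,py) (0,0) (-1/4,1/4)); auto.
        unfold line_through; cbn [fst snd]; intro E. apply Hy. nra.
    - apply (refl_point P Ls L a b c (px,py) (0,0) (0,1)); auto.
      unfold line_through; cbn [fst snd]; intro E. apply Hx. nra. }
  assert (HE : P (0,-1/2)).
  { apply (P_eq P (refl 0 1 (1/4) (0,1))). apply (Href H2); auto; nd.
    unfold refl; cbn [fst snd]; f_equal; field. }
  assert (HX : Ls Xl) by (apply Hpb; auto; intro E; inversion E; lra).
  repeat split; auto.
  apply (bisector P Ls Xl Yl Dg 0 1 0 1 0 0); auto using Xl_eq, Yl_eq, Dg_eq; try nd; try lra.
  - exists (1,0). split. apply Xl_eq; cbn [fst snd]; lra. intro Q; apply Yl_eq in Q; cbn [fst snd] in Q; lra.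
Qed.

Lemma refl_X x y : refl 0 1 0 (x,y) = (x,-y).
Proof. unfold refl; cbn [fst snd]; f_equal; field. Qed.
Lemma refl_Y x y : refl 1 0 0 (x,y) = (-x,y).
Proof. unfold refl; cbn [fst snd]; f_equal; field. Qed.
Lemma refl_D x y : refl (0-1) (1-0) (0-0) (x,y) = (y,x).
Proof. unfold refl; cbn [fst snd]; f_equal; field. Qed.

Lemma proj_x P Ls x y : origami_pair P Ls -> P (0,0) -> P (0,1) -> P (x,y) -> P (x,0).
Proof.
  intros HO H0 H1 Hp.
  destruct (base P Ls HO H0 H1) as [Href [HX [HY HD]]].
  pose proof HO as [_ [Hint [Hthru _]]].
  destruct (Req_dec y 0) as [->|Hy]; [auto|].
  assert (Hp' : P (x,-y)) by (rewrite <- refl_X; apply (Href Xl); auto using Xl_eq; try nd).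
  assert (HV : Ls (line_through (x,y) (x,-y))) by (apply Hthru; auto; intro E; inversion E; lra).
  apply (Hint _ _ _ HV HX).
  - exists (x,y). split. unfold line_through; cbn [fst snd]; ring.
    intro Q; apply Xl_eq in Q; cbn [fst snd] in Q; lra.
  - unfold line_through; cbn [fst snd]; ring.
  - apply Xl_eq; cbn [fst snd]; lra.
Qed.

Lemma proj_y P Ls x y : origami_pair P Ls -> P (0,0) -> P (0,1) -> P (x,y) -> P (0,y).
Proof.
  intros HO H0 H1 Hp.
  destruct (base P Ls HO H0 H1) as [Href [HX [HY HD]]].
  pose proof HO as [_ [Hint [Hthru _]]].
  destruct (Req_dec x 0) as [->|Hx]; [auto|].
  assert (Hp' : P (-x,y)) by (rewrite <- refl_Y; apply (Href Yl); auto using Yl_eq; try nd).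
  assert (HV : Ls (line_through (x,y) (-x,y))) by (apply Hthru; auto; intro E; inversion E; lra).
  apply (Hint _ _ _ HV HY).
  - exists (x,y). split. unfold line_through; cbn [fst snd]; ring.
    intro Q; apply Yl_eq in Q; cbn [fst snd] in Q; lra.
  - unfold line_through; cbn [fst snd]; ring.
  - apply Yl_eq; cbn [fst snd]; lra.
Qed.

Lemma combine P Ls x y : origami_pair P Ls -> P (0,0) -> P (0,1) -> P (x,0) -> P (0,y) -> P (x,y).
Proof.
  intros HO H0 H1 Hx Hy.
  destruct (base P Ls HO H0 H1) as [Href [HX [HY HD]]].
  pose proof HO as [_ [_ [_ [Hpb _]]]].
  destruct (Req_dec x 0) as [->|Hx0]; [auto|].
  assert (HL : Ls (perp_bisector (0,0) (x,0))) by (apply Hpb; auto; intro E; inversion E; lra).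
  assert (EL : line_eq (perp_bisector (0,0) (x,0)) (2*x) 0 (x^2)).
  { intros [u v]; unfold perp_bisector, dist2; cbn [fst snd]; split; intro; lra. }
  apply (P_eq P (refl (2*x) 0 (x^2) (0,y))).
  - apply (Href _ _ _ _ _ HL EL); auto; try (left; lra).
  - unfold refl; cbn [fst snd]; f_equal; field; auto.
Qed.

Lemma translate P Ls v1 v2 : origami_pair P Ls -> P (0,0) -> P (0,1) -> P v1 -> P v2 ->
  exists w, P w /\ dist2 w (0,0) = dist2 v1 v2.
Proof.
  intros HO H0 H1 Hv1 Hv2.
  destruct (base P Ls HO H0 H1) as [Href [HX [HY HD]]].
  pose proof HO as [_ [_ [_ [Hpb _]]]].
  destruct v1 as [p q]; destruct v2 as [s t].
  destruct (classic ((p,q) = (0,0))) as [E|E].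
  - exists (s,t). split; auto. inversion E; subst. unfold dist2; cbn [fst snd]; ring.
  - assert (Hnd : 2*p <> 0 \/ 2*q <> 0).
    { destruct (Req_dec p 0); destruct (Req_dec q 0); subst; try (left; lra); try (right; lra).
      exfalso; auto. }
    assert (HL : Ls (perp_bisector (p,q) (0,0))) by (apply Hpb; auto).
    assert (EL : line_eq (perp_bisector (p,q) (0,0)) (2*p) (2*q) (p^2+q^2)).
    { intros [u v]; unfold perp_bisector, dist2; cbn [fst snd]; split; intro; lra. }
    exists (refl (2*p) (2*q) (p^2+q^2) (s,t)). split.
    + apply (Href _ _ _ _ _ HL EL); auto.
    + replace (0,0) with (refl (2*p) (2*q) (p^2+q^2) (p,q)).
      * rewrite refl_iso by auto. unfold dist2; cbn [fst snd]; ring.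
      * pose proof (n_pos _ _ Hnd).
        unfold refl; cbn [fst snd]; f_equal; field; lra.
Qed.

Lemma rotate P Ls w : origami_pair P Ls -> P (0,0) -> P (0,1) -> P w ->
  P (sqrt (dist2 w (0,0)), 0) /\ P (- sqrt (dist2 w (0,0)), 0).
Proof.
  intros HO H0 H1 Hw.
  destruct (base P Ls HO H0 H1) as [Href [HX [HY HD]]].
  pose proof HO as [_ [Hint [Hthru _]]].
  destruct w as [wx wy].
  assert (Hs : dist2 (wx,wy) (0,0) = wx^2+wy^2) by (unfold dist2; cbn [fst snd]; ring).
  rewrite Hs. set (r := sqrt (wx^2+wy^2)).
  assert (Hr : r*r = wx^2+wy^2) by (apply sqrt_sqrt; nra).
  assert (Hr0 : 0 <= r) by apply sqrt_pos.
  assert (Hneg : forall z, P (z,0) -> P (-z,0)).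
  { intros z Hz. rewrite <- refl_Y. apply (Href Yl); auto using Yl_eq; try nd. }
  destruct (Req_dec wy 0) as [->|Hy].
  - assert (Hr' : r = Rabs wx).
    { unfold r. rewrite <- sqrt_Rsqr_abs. f_equal. unfold Rsqr; ring. }
    rewrite Hr'. unfold Rabs; destruct (Rcase_abs wx).
    + split; [apply Hneg|rewrite Ropp_involutive]; auto.
    + split; [|apply Hneg]; auto.
  - assert (Hrp : 0 < r) by nra.
    assert (Hrw : r - wx <> 0) by (intro; nra).
    assert (Hr0' : r <> 0) by lra.
    assert (HL1 : Ls (line_through (0,0) (wx,wy))) by (apply Hthru; auto; intro E; inversion E; lra).
    assert (EL1 : line_eq (line_through (0,0) (wx,wy)) (-wy) wx 0).
    { intros [u v]; unfold line_through; cbn [fst snd]; split; intro; lra. }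
    assert (EX : line_eq Xl 0 r 0).
    { intros z. split; intro Q.
      - apply Xl_eq in Q. replace (snd z) with 0 by lra. ring.
      - apply Xl_eq. assert (Hz : r * snd z = 0) by lra. apply Rmult_integral in Hz. destruct Hz as [Hz|Hz]; [lra|]. rewrite Hz; ring. }
    pose (B := fun z : point => (-wy - 0)*fst z + (wx - r)*snd z = 0 - 0).
    assert (HB : Ls B).
    { apply (bisector P Ls _ Xl B (-wy) wx 0 0 r 0 HO HL1 HX EL1 EX); try nd.
      - nra.
      - exists (wx,wy). split. unfold line_through; cbn [fst snd]; ring.
        intro Q; apply Xl_eq in Q; cbn [fst snd] in Q; lra.
      - intro z; unfold B; tauto. }
    assert (Hm : P (-r,0)).
    { apply (P_eq P (refl (-wy-0) (wx-r) (0-0) (wx,wy))).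
      - apply (Href B); auto; [intro z; unfold B; tauto | nd].
      - unfold refl; cbn [fst snd].
        assert (Hn : (-wy-0)^2 + (wx-r)^2 = 2*r*(r-wx)) by nra.
        rewrite Hn.
        replace ((-wy-0)*wx + (wx-r)*wy - (0-0)) with (-r*wy) by ring.
        f_equal.
        + transitivity (wx - wy*wy/(r-wx)); [field; auto|].
          replace (wy*wy) with ((r-wx)*(r+wx)) by nra. field; auto.
        + field; auto. }
    split; auto. rewrite <- (Ropp_involutive r). apply Hneg; auto.
Qed.

Lemma Rabs_cases x d : Rabs x = d -> x = d \/ x = -d.
Proof. unfold Rabs; destruct (Rcase_abs x); lra. Qed.

Lemma onaxes P Ls v1 v2 x : origami_pair P Ls -> P (0,0) -> P (0,1) -> P v1 -> P v2 ->
  Rabs x = Defs.dist v1 v2 -> P (x,0) /\ P (0,x).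
Proof.
  intros HO H0 H1 Hv1 Hv2 Hx.
  destruct (base P Ls HO H0 H1) as [Href [HX [HY HD]]].
  destruct (translate P Ls v1 v2 HO H0 H1 Hv1 Hv2) as [w [Hw Hd]].
  destruct (rotate P Ls w HO H0 H1 Hw) as [Ha Hb].
  rewrite Hd in Ha, Hb. unfold Defs.dist in Hx.
  assert (Px : P (x,0)) by (destruct (Rabs_cases _ _ Hx) as [->| ->]; auto).
  split; auto.
  rewrite <- refl_D. apply (Href Dg); auto using Dg_eq; try nd.
Qed.

Theorem mainTheorem2 : forall x y : R, P0 (x, y) <-> (F0 x /\ F0 y).
Proof.
  intros x y. split.
  - intros Hp. assert (HO : P0 (0,0)) by (intros P H0 H1 _; auto).
    split.
    + exists (0,0), (x,0). repeat split; auto.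
      * intros P H0 H1 [Ls HL]. apply (proj_x P Ls x y); auto; apply Hp; auto; exists Ls; auto.
      * unfold Defs.dist, dist2; cbn [fst snd]. rewrite <- sqrt_Rsqr_abs. f_equal. unfold Rsqr; ring.
    + exists (0,0), (0,y). repeat split; auto.
      * intros P H0 H1 [Ls HL]. apply (proj_y P Ls x y); auto; apply Hp; auto; exists Ls; auto.
      * unfold Defs.dist, dist2; cbn [fst snd]. rewrite <- sqrt_Rsqr_abs. f_equal. unfold Rsqr; ring.
  - intros [[v1 [v2 [Hv1 [Hv2 Hx]]]] [u1 [u2 [Hu1 [Hu2 Hy]]]]].
    intros P H0 H1 [Ls HL].
    apply (combine P Ls); auto.
    + apply (onaxes P Ls v1 v2 x); auto; [apply Hv1|apply Hv2]; auto; exists Ls; auto.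
    + apply (onaxes P Ls u1 u2 y); auto; [apply Hu1|apply Hu2]; auto; exists Ls; auto.
Qed.
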